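(* Let $N\ge1$ be the number of rounds of \texttt{DEVI}$(\gamma,\mathcal P,N)$. Then $Q^{(N-1)}(s,a)-Q^{(N)}(s,a)\le\gamma^{N-1}$ for all $(s,a)\in\mathcal S\times\mathcal A$.
   Context: Finite $\mathcal S,\mathcal A$, reward $r:\mathcal S\times\mathcal A\to[0,1]$, sets $\mathcal S_{s,a}\subseteq\mathcal S$, $\gamma\in[0,1)$. $\mathcal P$ is a nonempty compact set (the confidence polytope given as input) of vectors $p\in[0,1]^{\mathcal S\times\mathcal A\times\mathcal S}$ with $\sum_{s'\in\mathcal S_{s,a}}p_{s,a,s'}=1$ for all $(s,a)$. \texttt{DEVI}$(\gamma,\mathcal P,N)$: $Q^{(0)}(s,a)=1/(1-\gamma)$; for $n=1,\dots,N$: $V^{(n-1)}(s)=\max_aQ^{(n-1)}(s,a)$ and $Q^{(n)}(s,a)=r(s,a)+\gamma\max_{p\in\mathcal P}\sum_{s'\in\mathcal S_{s,a}}p_{s,a,s'}V^{(n-1)}(s')$. *)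

(* Defs.v *)
From HB Require Import structures.
From mathcomp Require Import all_boot all_order all_algebra.
From mathcomp Require Import all_classical all_reals all_analysis.
Set Implicit Arguments. Unset Strict Implicit. Unset Printing Implicit Defensive.
Import Order.TTheory GRing.Theory Num.Theory.
Import numFieldNormedType.Exports.
Local Open Scope classical_set_scope.
Local Open Scope ring_scope.

(* The inner maximum over the compact set P is
   written as the supremum of the (attained) set of values; the maximum over
   the finite action set is the supremum of the finite range. *)
Section DEVI.
Context {R : realType} {S A : finType}.
Variables (gamma : R) (r : S -> A -> R) (Ssa : S -> A -> {set S})
          (P : set (S * A * S -> R)).

Definition DEVI_V (Q : S -> A -> R) (s : S) : R := sup (range (Q s)).

Fixpoint DEVI_Q (n : nat) : S -> A -> R :=
  match n with
  | 0 => fun _ _ => (1 - gamma)^-1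
  | n'.+1 => fun s a =>
      r s a + gamma * sup [set \sum_(s' in Ssa s a) p (s, a, s') * DEVI_V (DEVI_Q n') s'
                          | p in P]
  end.
End DEVI.

(* Main.v *)
Require Import Defs.
From HB Require Import structures.
From mathcomp Require Import all_boot all_order all_algebra.
From mathcomp Require Import all_classical all_reals all_analysis.
Import Order.TTheory GRing.Theory Num.Theory.
Import numFieldNormedType.Exports.
From mathcomp Require Import ring lra.
Local Open Scope classical_set_scope.
Local Open Scope ring_scope.

Lemma le_sum_one (R : realType) (I : finType) (F : I -> R) (j : I) :
  (forall i, 0 <= F i) -> F j <= \sum_i F i.
Proof.
move=> F0; rewrite (bigD1 j) //= lerDl; apply: sumr_ge0 => i _; exact: F0.
Qed.

Lemma range_ub (R : realType) (A : finType) (f : A -> R) :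
  has_ubound (range f).
Proof.
exists (\sum_a `|f a|) => _ [a _ <-].
apply: le_trans (ler_norm _) _. by rewrite (bigD1 a) //= lerDl sumr_ge0.
Qed.

Lemma sup_range_diff (R : realType) (A : finType) (f g : A -> R) (c : R) :
  0 <= c -> (forall a, f a - g a <= c) -> sup (range f) - sup (range g) <= c.
Proof.
move=> c0 H.
case: (pselect (exists a : A, True)) => [[a0 _]|NA]; last first.
  have E : forall h : A -> R, range h = set0.
    by move=> h; apply/seteqP; split => // x [a _ _]; apply: NA; exists a.
  by rewrite !E sup0 subrr.
rewrite lerBlDr; apply: ge_sup; first by exists (f a0), a0.
move=> _ [a _ <-].
have := H a; rewrite lerBlDr => /le_trans; apply.
apply: lerD => //; apply: ub_le_sup; [exact: range_ub | by exists a].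
Qed.

Section Img.
Variables (R : realType) (S : finType) (X : Type) (P : set X)
  (w : X -> S -> R) (D : {set S}).
Hypothesis w01 : forall p, P p -> forall s, 0 <= w p s <= 1.
Hypothesis w1 : forall p, P p -> \sum_(s in D) w p s = 1.

Lemma img_ub (V : S -> R) :
  has_ubound [set \sum_(s in D) w p s * V s | p in P].
Proof.
exists (\sum_(s in D) `|V s|) => _ [p Pp <-].
apply: ler_sum => s _.
have /andP[h0 h1] := w01 p Pp s.
apply: le_trans (ler_norm _) _; rewrite normrM ger0_norm //.
by rewrite ler_piMl.
Qed.

Lemma img_diff (V W : S -> R) (c : R) : P !=set0 ->
  (forall s, V s - W s <= c) ->
  sup [set \sum_(s in D) w p s * V s | p in P] -
  sup [set \sum_(s in D) w p s * W s | p in P] <= c.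
Proof.
move=> [p0 Pp0] H; rewrite lerBlDr addrC; apply: ge_sup; first by exists (\sum_(s in D) w p0 s * V s), p0.
move=> _ [p Pp <-].
have -> : \sum_(s in D) w p s * V s =
  \sum_(s in D) w p s * W s + \sum_(s in D) w p s * (V s - W s).
  by rewrite -big_split /=; apply: eq_bigr => s _; rewrite -mulrDr addrC subrK.
apply: lerD; first by apply: ub_le_sup; [exact: img_ub | exists p].
apply: le_trans (_ : \sum_(s in D) w p s * c <= c).
  apply: ler_sum => s _; have /andP[h0 _] := w01 p Pp s; exact: ler_wpM2l.
by rewrite -mulr_suml w1 // mul1r.
Qed.

Lemma img_const (c : R) : P !=set0 ->
  sup [set \sum_(s in D) w p s * c | p in P] = c.
Proof.
move=> [p0 Pp0].
have -> : [set \sum_(s in D) w p s * c | p in P] = [set c].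
  apply/seteqP; split => x /=.
    by move=> [p Pp <-]; rewrite -mulr_suml w1 // mul1r.
  by move=> ->; exists p0 => //; rewrite -mulr_suml w1 // mul1r.
exact: sup1.
Qed.
End Img.

Theorem lemma22 (R : realType) (S A : finType)
  (r : S -> A -> R) (Ssa : S -> A -> {set S}) (gamma : R)
  (P : set (S * A * S -> R)) (N : nat) :
  (forall s a, 0 <= r s a <= 1) ->
  0 <= gamma < 1 ->
  P !=set0 ->
  compact (P : set {ptws (S * A * S) -> R}) ->
  (forall p, P p -> forall i, 0 <= p i <= 1) ->
  (forall p, P p -> forall s a, \sum_(s' in Ssa s a) p (s, a, s') = 1) ->
  (1 <= N)%N ->
  forall s a,
    DEVI_Q gamma r Ssa P N.-1 s a - DEVI_Q gamma r Ssa P N s a <= gamma ^+ N.-1.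
Proof.
move=> hr /andP[g0 g1] P0 _ p01 p1 N1.
case: N N1 => // n _ /=.
elim: n => [|n IH] s a.
  rewrite /= /DEVI_V.
  have -> : range (fun _ : A => (1 - gamma)^-1) = [set (1 - gamma)^-1].
    by apply/seteqP; split => x /=; [move=> [? _ <-] | move=> ->; exists a].
  rewrite sup1.
  rewrite (@img_const R S _ P (fun p s' => p (s, a, s')) (Ssa s a) (fun p Pp => p1 p Pp s a)) //.
  have /andP[_ r1] := hr s a.
  have gn : 1 - gamma != 0 by rewrite subr_eq0 eq_sym lt_eqF.
  have -> : (1 - gamma)^-1 - (r s a + gamma / (1 - gamma)) = 1 - r s a by field.
  by rewrite expr0 lerBlDr lerDl; have /andP[] := hr s a.
set F := DEVI_Q gamma r Ssa P.
have -> : F n.+1 s a = r s a + gamma * sup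
    [set \sum_(s' in Ssa s a) p (s, a, s') * DEVI_V (F n) s' | p in P] by [].
rewrite opprD addrACA subrr add0r -mulrBr exprS.
apply: ler_wpM2l => //.
apply: (@img_diff R S _ P (fun p s' => p (s, a, s')) (Ssa s a)) => //.
- by move=> p Pp s'; exact: p01.
- by move=> p Pp; exact: p1.
- move=> s'; apply: sup_range_diff; first exact: exprn_ge0.
  exact: IH.
Qed.
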